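(* Let $\mathcal A$ be an ordered normed algebra with unit $e$ whose algebra cone $\mathcal A^+$ is normal with normality constant $\alpha$. Let $a,b\in\mathcal A$ with at least one of them positive. Then for every $\delta$ with $0<\delta<\frac{1}{\alpha}e^{-2\alpha\|a\|\,\|b\|}$ there is no $x\in\mathcal A$ with $\|x\|<\delta$ and $ab-ba\geq e+x$.
   Context: A normed algebra $\mathcal A$ (real or complex, with submultiplicative norm) with unit $e$. A cone is a nonempty subset $\mathcal A^+\subseteq\mathcal A$ with $\mathcal A^++\mathcal A^+\subseteq\mathcal A^+$, $\lambda\mathcal A^+\subseteq\mathcal A^+$ for all $\lambda\geq 0$, and $\mathcal A^+\cap(-\mathcal A^+)=\{0\}$; it induces the partial order $a\leq b \iff b-a\in\mathcal A^+$. Elements of $\mathcal A^+$ are called positive. The cone is an algebra cone if $\mathcal A^+\cdot\mathcal A^+\subseteq\mathcal A^+$ and $e\in\mathcal A^+$; then $\mathcal A$ is called an ordered normed algebra. The cone is normal with normality constant $\alpha$ (necessarily $\alpha\geq1$) if $0\leq x\leq y$ implies $\|x\|\leq\alpha\|y\|$. In the bound, $e^{(\cdot)}$ denotes the real exponential function. *)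

(* Defs.v *)
From HB Require Import structures.
From mathcomp Require Import all_boot all_order all_algebra.
From mathcomp Require Import reals.
From mathcomp Require Import sequences exp.
Set Implicit Arguments. Unset Strict Implicit. Unset Printing Implicit Defensive.
Import Order.TTheory GRing.Theory Num.Theory.
Local Open Scope ring_scope.

Definition is_algebra_norm (R : realType) (A : algType R) (nrm : A -> R) : Prop :=
  [/\ (forall x, 0 <= nrm x),
      (forall x, nrm x = 0 -> x = 0),
      (forall x y, nrm (x + y) <= nrm x + nrm y),
      (forall (k : R) x, nrm (k *: x) = `|k| * nrm x)
    & (forall x y, nrm (x * y) <= nrm x * nrm y)].

Definition is_cone (R : realType) (A : algType R) (P : A -> Prop) : Prop :=
  [/\ (exists x, P x),
      (forall x y, P x -> P y -> P (x + y)),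
      (forall (l : R) x, 0 <= l -> P x -> P (l *: x))
    & (forall x, P x -> P (- x) -> x = 0)].

Definition is_algebra_cone (R : realType) (A : algType R) (P : A -> Prop) : Prop :=
  [/\ is_cone P, (forall x y, P x -> P y -> P (x * y)) & P 1].

Definition cone_le (R : realType) (A : algType R) (P : A -> Prop) (x y : A) : Prop :=
  P (y - x).

Definition normal_cone (R : realType) (A : algType R) (nrm : A -> R)
    (P : A -> Prop) (alpha : R) : Prop :=
  forall x y, cone_le P 0 x -> cone_le P x y -> nrm x <= alpha * nrm y.

(* Main.v *)
Require Import Defs.
From HB Require Import structures.
From mathcomp Require Import all_boot all_order all_algebra.
From mathcomp Require Import reals.
From mathcomp Require Import sequences exp.
From mathcomp Require Import ring lra.
Import Order.TTheory GRing.Theory Num.Theory.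
Local Open Scope ring_scope.

Lemma partial_exp (R : realType) (k : R) n : 0 <= k ->
  \sum_(0 <= j < n) k ^+ j / j`!%:R <= expR k.
Proof.
move=> k0.
have := @nondecreasing_cvgn_le R (series (exp_coeff k)) _ (is_cvg_series_exp_coeff k) n.
rewrite /series /= /exp_coeff /=; apply.
apply: (@nondecreasing_series R (exp_coeff k) xpredT 0) => i _ _.
by rewrite /exp_coeff /= divr_ge0 // exprn_ge0.
Qed.

Lemma real_key (R : realType) (al be s xi : R) (m : nat -> R) :
 0 < al -> 0 <= be -> 0 <= s -> 0 <= xi ->
 (forall n, 0 <= m n) -> 1 <= m 0%N ->
 (forall n, m n.+1 <= s ^+ n.+1) ->
 (forall n, n.+1%:R * m n <= al * (2 * be * m n.+1 + n.+1%:R * xi * s ^+ n)) ->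
 expR (- (2 * al * be * s)) <= al * xi.
Proof.
move=> al0 be0 s0 xi0 m0 m01 mle H.
rewrite leNgt; apply/negP => Hlt.
set k := 2 * al * be * s. set eta := al * xi.
have k0 : 0 <= k by rewrite /k !mulr_ge0 // ltW.
have eta0 : 0 <= eta by rewrite /eta mulr_ge0 // ltW.
have [s00|spos] := eqVneq s 0.
  have := H 0%N; have := mle 0%N; rewrite expr1 s00 => m1le.
  have m1 : m 1%N = 0 by apply/eqP; rewrite eq_le m1le m0.
  rewrite m1 expr0 !mulr1 mulr0 add0r !mul1r => h.
  move: Hlt; rewrite /k s00 mulr0 oppr0 expR0 => h2.
  have := le_lt_trans (le_trans m01 h) h2; by rewrite ltxx.
have sp : 0 < s by rewrite lt_def spos s0.
pose c : R := 1 - eta * expR k.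
have cpos : 0 < c.
  rewrite /c subr_gt0.
  have h := Hlt; rewrite -/k -/eta -(ltr_pM2r (expR_gt0 k)) in h.
  by rewrite [X in _ < X]mulrC expRxMexpNx_1 in h.
pose Sn n := \sum_(0 <= j < n) k ^+ j / j`!%:R.
have C : forall n, n`!%:R * s ^+ n * (1 - eta * Sn n) <= k ^+ n * m n.
  elim => [|n IH].
    by rewrite /Sn big_geq // mulr0 subr0 !mulr1 expr0 mul1r.
  have Hs : n.+1%:R * s * m n <= k * m n.+1 + eta * (n.+1%:R * s ^+ n.+1).
    have := H n => h.
    have := ler_wpM2l s0 h.
    set L := (X in X <= _ -> _); set Rr := (X in _ <= X -> _).
    have -> : L = n.+1%:R * s * m n by rewrite /L; ring.
    have -> : Rr = k * m n.+1 + eta * (n.+1%:R * s ^+ n.+1).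
      by rewrite /Rr /k /eta exprS; ring.
    by [].
  have fn0 : (n`!%:R : R) != 0 by rewrite pnatr_eq0 -lt0n fact_gt0.
  have e1 : n.+1`!%:R * s ^+ n.+1 * (1 - eta * Sn n.+1) =
     n.+1%:R * s * (n`!%:R * s ^+ n * (1 - eta * Sn n)) - k ^+ n * (eta * (n.+1%:R * s ^+ n.+1)).
    rewrite /Sn big_nat_recr //= -/(Sn n) factS natrM exprS.
    field; exact: fn0.
  rewrite e1.
  have nsp : 0 <= n.+1%:R * s by rewrite mulr_ge0.
  apply: le_trans (lerB (ler_wpM2l nsp IH) (lexx _)) _.
  have -> : n.+1%:R * s * (k ^+ n * m n) - k ^+ n * (eta * (n.+1%:R * s ^+ n.+1))
    = k ^+ n * (n.+1%:R * s * m n - eta * (n.+1%:R * s ^+ n.+1)) by ring.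
  have -> : k ^+ n.+1 * m n.+1 = k ^+ n * (k * m n.+1) by rewrite exprS; ring.
  apply: ler_wpM2l; first exact: exprn_ge0.
  by rewrite lerBlDr.
have T : forall j, c <= k ^+ j / j`!%:R.
  case => [|j].
    rewrite expr0 fact0 divr1 /c lerBlDr lerDl; exact: mulr_ge0 eta0 (expR_ge0 _).
  have := C j.+1; have := mle j; set n := j.+1 => mle' Cn.
  have h1 : n`!%:R * s ^+ n * (1 - eta * Sn n) <= k ^+ n * s ^+ n.
    apply: le_trans Cn _; apply: ler_wpM2l; [exact: exprn_ge0 | exact: mle'].
  have spn : 0 < s ^+ n by exact: exprn_gt0.
  have fp : (0 : R) < n`!%:R by rewrite ltr0n fact_gt0.
  have h2 : c <= 1 - eta * Sn n.
    rewrite /c lerB // ler_wpM2l //; exact: partial_exp.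
  have h3 : n`!%:R * (1 - eta * Sn n) <= k ^+ n.
    by rewrite -(ler_pM2r spn); move: h1; rewrite mulrAC.
  rewrite ler_pdivlMr // mulrC; apply: le_trans h3.
  by rewrite ler_wpM2l // ltW.
pose N := (Num.truncn (expR k / c)).+1.
have h4 : c *+ N <= expR k.
  apply: (le_trans _ (@partial_exp _ k N k0)).
  have -> : c *+ N = \sum_(0 <= j < N) c by rewrite sumr_const_nat subn0.
  by apply: ler_sum => j _; exact: T j.
have h5 := Num.Theory.truncnS_gt (expR k / c).
rewrite -/N ltr_pdivrMr // in h5.
rewrite mulr_natl in h5; have := le_lt_trans h4 h5; by rewrite ltxx.
Qed.

Lemma zid (V : zmodType) (a m e s y W w : V) :
  a - e - (s + y) - (W + w) = (a - m - s - W) + (m - e - (w + y)).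
Proof.
rewrite !opprD !addrA.
rewrite [RHS](ACl (1*6*3*8*4*7*2*5)%AC) /= subrK.
by [].
Qed.

Fixpoint Sx (R : realType) (A : algType R) (p x : A) (n : nat) : A :=
  if n is n'.+1 then p * Sx R A p x n' + x * p ^+ n' else 0.
Arguments Sx {R A}.

Lemma Tstep (R : realType) (A : algType R) (p q x : A) n :
  let T n := p ^+ n.+1 * q - q * p ^+ n.+1 - Sx p x n.+1 - p ^+ n *+ n.+1 in
  T n.+1 = p * T n + (p * q - q * p - (1 + x)) * p ^+ n.+1.
Proof.
move=> T; rewrite /T.
have e1 : p * (p ^+ n.+1 * q) = p ^+ n.+2 * q by rewrite mulrA -exprS.
have e2 : p * (q * p ^+ n.+1) = p * q * p ^+ n.+1 by rewrite mulrA.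
have e3 : p * (p ^+ n *+ n.+1) = p ^+ n.+1 *+ n.+1 by rewrite mulrnAr -exprS.
have e4 : q * p * p ^+ n.+1 = q * p ^+ n.+2 by rewrite -mulrA -exprS.
have e5 : p ^+ n.+1 *+ n.+2 = p ^+ n.+1 *+ n.+1 + p ^+ n.+1 by rewrite mulrSr.
rewrite !mulrBr e1 e2 e3 !mulrBl mulrDl mul1r e4 e5 /=.
exact: zid.
Qed.

Lemma alg_key (R : realType) (A : algType R) (nrm : A -> R) (P : A -> Prop)
  (alpha : R) (p q x : A) :
  (1 : A) != 0 -> is_algebra_norm nrm -> is_algebra_cone P ->
  normal_cone nrm P alpha ->
  P p -> P (p * q - q * p - (1 + x)) ->
  expR (- (2 * alpha * nrm q * nrm p)) <= alpha * nrm x /\ 0 < alpha.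
Proof.
move=> one0 [n0 neq0 ntri nsc nmul] [[[z0 Pz0] Padd Pscal Ppt] Pmul P1] Hn Pp Pd.
have nN : forall y, nrm (- y) = nrm y.
  by move=> y; rewrite -scaleN1r nsc normrN normr1 mul1r.
have nB : forall y z, nrm (y - z) <= nrm y + nrm z.
  by move=> y z; rewrite -(nN z); exact: ntri.
have P0 : P 0 by rewrite -(scale0r z0); apply: Pscal.
have n1pos : 0 < nrm 1.
  rewrite lt_def n0 andbT; apply/negP => /eqP h; by move/eqP: one0; apply; apply: neq0.
have n1ge1 : 1 <= nrm 1.
  have := nmul 1 1; rewrite mulr1 => h; nra.
have al1 : 1 <= alpha.
  have := Hn 1 1; rewrite /cone_le subr0 subrr => h; have {h} := h P1 P0 => h; nra.
have al0 : 0 < alpha by apply: lt_le_trans al1; exact: ltr01.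
split => //.
have Ppow : forall n, P (p ^+ n) by elim => [|n IH]; rewrite ?expr0 // exprS; apply: Pmul.
have npow : forall n, nrm (p ^+ n.+1) <= nrm p ^+ n.+1.
  elim => [|n IH]; first by rewrite !expr1.
  rewrite exprS [X in _ <= X]exprS; apply: le_trans (nmul _ _) _.
  by apply: ler_wpM2l => //.
have nxp : forall n, nrm (x * p ^+ n) <= nrm x * nrm p ^+ n.
  case => [|n]; first by rewrite !expr0 !mulr1.
  by apply: le_trans (nmul _ _) _; apply: ler_wpM2l.
have nS : forall n, nrm (Sx p x n.+1) <= n.+1%:R * nrm x * nrm p ^+ n.
  elim => [|n IH].
    by rewrite /= mulr0 add0r expr0 mulr1 mul1r expr0 mulr1.
  rewrite /=; apply: le_trans (ntri _ _) _.
  apply: le_trans (lerD (nmul _ _) (nxp _)) _.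
  rewrite -/(Sx p x n.+1).
  apply: le_trans (lerD (ler_wpM2l (n0 p) IH) (lexx _)) _.
  rewrite -[n.+2%:R]natr1 exprS le_eqVlt; apply/orP; left; apply/eqP; ring.
have PT : forall n, P (p ^+ n.+1 * q - q * p ^+ n.+1 - Sx p x n.+1 - p ^+ n *+ n.+1).
  elim => [|n IH].
    rewrite /= !expr1 expr0 mulr0 add0r mulr1 mulr1n.
    by move: Pd; rewrite opprD addrA addrAC.
  have := @Tstep R A p q x n; rewrite /= => ->.
  by apply: Padd; apply: Pmul.
have main : forall n, n.+1%:R * nrm (p ^+ n) <=
   alpha * (2 * nrm q * nrm (p ^+ n.+1) + n.+1%:R * nrm x * nrm p ^+ n).
  move=> n.
  have := Hn (p ^+ n *+ n.+1) (p ^+ n.+1 * q - q * p ^+ n.+1 - Sx p x n.+1).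
  rewrite /cone_le subr0 => h.
  have hP : P (p ^+ n *+ n.+1) by rewrite -scaler_nat; apply: Pscal => //; exact: ler0n.
  have h2 := h hP (PT n).
  rewrite -scaler_nat nsc ger0_norm ?ler0n // in h2.
  apply: le_trans h2 _; apply: ler_wpM2l; first exact: ltW.
  apply: le_trans (nB _ _) _; apply: lerD; last exact: nS.
  apply: le_trans (nB _ _) _.
  apply: le_trans (lerD (nmul _ _) (nmul _ _)) _.
  rewrite le_eqVlt; apply/orP; left; apply/eqP; ring.
have := @real_key R alpha (nrm q) (nrm p) (nrm x) (fun n => nrm (p ^+ n)) al0 (n0 q) (n0 p) (n0 x)
  (fun n => n0 _) _ npow main.
rewrite expr0 => H; exact: H.
Qed.

Theorem corollary2p5 (R : realType) (A : algType R) (nrm : A -> R)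
    (P : A -> Prop) (alpha : R) :
  (1 : A) != 0 ->
  is_algebra_norm nrm ->
  is_algebra_cone P ->
  normal_cone nrm P alpha ->
  forall a b : A, (cone_le P 0 a \/ cone_le P 0 b) ->
  forall delta : R, 0 < delta ->
    delta < alpha^-1 * expR (- (2 * alpha * nrm a * nrm b)) ->
    ~ (exists x : A, nrm x < delta /\ cone_le P (1 + x) (a * b - b * a)).
Proof.
move=> one0 Hnorm Hcone Hn a b Hab delta d0 Hd [x [xd Hx]].
have [Hexp al0] : expR (- (2 * alpha * nrm a * nrm b)) <= alpha * nrm x /\ 0 < alpha.
  case: Hab; rewrite /cone_le subr0 => Hp.
    have [h1 h2] := @alg_key R A nrm P alpha _ _ _ one0 Hnorm Hcone Hn Hp Hx.
    by split => //; rewrite mulrAC.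
  have Hd' : P (b * (- a) - (- a) * b - (1 + x)).
    have -> : b * (- a) - (- a) * b = a * b - b * a by rewrite mulrN mulNr opprK addrC.
    exact: Hx.
  have [h1 h2] := @alg_key R A nrm P alpha _ _ _ one0 Hnorm Hcone Hn Hp Hd'.
  split => //.
  have e : nrm (- a) = nrm a.
    case: Hnorm => _ _ _ nsc _.
    by rewrite -scaleN1r nsc normrN normr1 mul1r.
  by rewrite e in h1.
set E := expR _ in Hexp Hd.
have ai : alpha * alpha^-1 = 1 by rewrite mulfV // gt_eqF.
have : alpha * delta < E.
  have := ltr_pM2l al0 delta (alpha^-1 * E); rewrite Hd mulrA ai mul1r.
  by move=> ->.
have : alpha * nrm x < alpha * delta by rewrite ltr_pM2l.
move=> h1 h2; have := le_lt_trans Hexp (lt_trans h1 h2); by rewrite ltxx.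
Qed.
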